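(* Let $\mathfrak{A}$ be an atomic weakly associative relation algebra. Let $B=\{s\in{}^3\mathrm{At}(\mathfrak{A}): s_2;s_0\ge s_1\}$ and, for $\{\kappa,\lambda,\mu\}=\{0,1,2\}$, let $T_\kappa=\{\langle s,t\rangle\in B\times B:s_\kappa=t_\kappa\}$, $E_{\kappa\kappa}=B$, and $E_{\kappa\lambda}=E_{\lambda\kappa}=\{s\in B:s_\mu\le1'\}$. Then $\mathfrak{B}=\langle B,T_\kappa,E_{\kappa\lambda}\rangle_{\kappa,\lambda<3}$ is a suitable structure.
   Context: WA: algebras $\langle A,+,\overline{\phantom{x}},;,\breve{\phantom{x}},1'\rangle$ with $x\cdot y=\overline{\overline{x}+\overline{y}}$, $0'=\overline{1'}$, $1=1'+0'$, $0=\overline{1}$, satisfying for all $x,y,z$: $x+y=y+x$; $x+(y+z)=(x+y)+z$; $\overline{\overline{x}+\overline{y}}+\overline{\overline{x}+y}=x$; $((x\cdot 1');1);1=(x\cdot1');1$; $(x+y);z=x;z+y;z$; $x;1'=x$; $\breve{\breve{x}}=x$; $\breve{(x+y)}=\breve{x}+\breve{y}$; $\breve{(x;y)}=\breve{y};\breve{x}$; $\breve{x};\overline{x;y}+\overline{y}=\overline{y}$. $\mathrm{At}(\mathfrak{A})$ = set of atoms; triples are $s=\langle s_0,s_1,s_2\rangle$. A structure $\langle B,T_\kappa,E_{\kappa\lambda}\rangle_{\kappa,\lambda<\alpha}$ ($\alpha$ a nonzero ordinal) is a suitable structure if for all $\kappa,\lambda,\mu<\alpha$: (i) $T_\kappa\subseteq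 B\times B$ and $E_{\kappa\lambda}\subseteq B$; (ii) $T_\kappa$ is an equivalence relation on $B$; (iii) $E_{\kappa\kappa}=B$; (iv) $E_{\kappa\lambda}=T_\mu^*(E_{\kappa\mu}\cap E_{\mu\lambda})$ whenever $\kappa\ne\mu\ne\lambda$, where $T_\mu^*(X)=\{y:\exists x\in X\ \langle y,x\rangle\in T_\mu\}$; (v) $T_\kappa\cap(E_{\kappa\lambda}\times E_{\kappa\lambda})\subseteq Id$ (the identity relation) whenever $\kappa\ne\lambda$. *)

(* Defs.v *)
Section WAdefs.
Context {A : Type}
  (add : A -> A -> A)
  (cmp : A -> A)
  (comp : A -> A -> A)
  (conv : A -> A)
  (idr : A).

Definition meet (x y : A) : A := cmp (add (cmp x) (cmp y)).
Definition diver : A := cmp idr.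
Definition top : A := add idr diver.
Definition bot : A := cmp top.
Definition le (x y : A) : Prop := add x y = y.

Definition is_WA : Prop :=
  (forall x y, add x y = add y x) /\
  (forall x y z, add x (add y z) = add (add x y) z) /\
  (forall x y, add (cmp (add (cmp x) (cmp y))) (cmp (add (cmp x) y)) = x) /\
  (forall x, comp (comp (meet x idr) top) top = comp (meet x idr) top) /\
  (forall x y z, comp (add x y) z = add (comp x z) (comp y z)) /\
  (forall x, comp x idr = x) /\
  (forall x, conv (conv x) = x) /\
  (forall x y, conv (add x y) = add (conv x) (conv y)) /\
  (forall x y, conv (comp x y) = comp (conv y) (conv x)) /\
  (forall x y, add (comp (conv x) (cmp (comp x y))) (cmp y) = cmp y).

Definition is_atom (a : A) : Prop :=
  a <> bot /\ forall y, le y a -> y = bot \/ y = a.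

Definition atomic : Prop :=
  forall x, x <> bot -> exists a, is_atom a /\ le a x.

End WAdefs.

(* Suitable structures <B, T_k, E_kl>_{k,l < alpha}, with the index set
   alpha given as a type I; the carrier B is a subset (predicate) of a type X. *)
Definition suitable {X I : Type} (B : X -> Prop) (T : I -> X -> X -> Prop)
  (E : I -> I -> X -> Prop) : Prop :=
  (forall k x y, T k x y -> B x /\ B y) /\
  (forall k l x, E k l x -> B x) /\
  (forall k x, B x -> T k x x) /\
  (forall k x y, T k x y -> T k y x) /\
  (forall k x y z, T k x y -> T k y z -> T k x z) /\
  (forall k x, E k k x <-> B x) /\
  (forall k l m, k <> m -> m <> l ->
     forall y, E k l y <-> exists x, E k m x /\ E m l x /\ T m y x) /\
  (forall k l, k <> l ->
     forall x y, T k x y -> E k l x -> E k l y -> x = y).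

Inductive idx3 : Type := i0 | i1 | i2.

Definition triple (A : Type) : Type := (A * A * A)%type.
Definition comp3 {A : Type} (s : triple A) (k : idx3) : A :=
  match s with (a, b, c) => match k with i0 => a | i1 => b | i2 => c end end.

Section Bstruct.
Context {A : Type} (add : A -> A -> A) (cmp : A -> A) (comp : A -> A -> A)
  (conv : A -> A) (idr : A).

Definition Bset (s : triple A) : Prop :=
  is_atom add cmp idr (comp3 s i0) /\ is_atom add cmp idr (comp3 s i1) /\
  is_atom add cmp idr (comp3 s i2) /\
  le add (comp3 s i1) (comp (comp3 s i2) (comp3 s i0)).

Definition Trel (k : idx3) (s t : triple A) : Prop :=
  Bset s /\ Bset t /\ comp3 s k = comp3 t k.

Definition Eset (k l : idx3) (s : triple A) : Prop :=
  Bset s /\ (k = l \/ forall m, m <> k -> m <> l -> le add (comp3 s m) idr).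
End Bstruct.

(* Main.v *)
Require Import Defs.
From Stdlib Require Import Setoid.

Section S.
Variable A : Type.
Variables (add : A -> A -> A) (n : A -> A) (comp : A -> A -> A) (conv : A -> A) (idr : A).
Hypothesis HW : is_WA add n comp conv idr.
Hypothesis HA : atomic add n idr.

Local Infix "⊕" := add (at level 50, left associativity).
Local Infix "⨾" := comp (at level 40, left associativity).
Local Infix "<<=" := (le add) (at level 70).
Local Notation one := (top add n idr).
Local Notation zero := (bot add n idr).

Lemma addC x y : x ⊕ y = y ⊕ x. Proof. apply HW. Qed.
Lemma addA x y z : x ⊕ (y ⊕ z) = x ⊕ y ⊕ z. Proof. apply HW. Qed.
Lemma hunt x y : n (n x ⊕ n y) ⊕ n (n x ⊕ y) = x. Proof. apply HW. Qed.

Lemma addCA x y z : x ⊕ (y ⊕ z) = y ⊕ (x ⊕ z).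
Proof. rewrite !addA. f_equal. apply addC. Qed.

Lemma ac_swap a b c d : (a ⊕ b) ⊕ (c ⊕ d) = (d ⊕ b) ⊕ (c ⊕ a).
Proof.
  rewrite <- !addA. rewrite (addCA a b). rewrite (addCA a c). rewrite (addC a d).
  rewrite (addCA c d). rewrite (addCA b d). reflexivity.
Qed.

Lemma hB x : x ⊕ n x = n x ⊕ n (n x).
Proof.
  pose proof (hunt x (n (n x))) as h1.
  pose proof (hunt (n x) (n (n x))) as h2.
  pose proof (hunt (n x) (n x)) as h3.
  pose proof (hunt (n (n x)) (n x)) as h4.
  rewrite (addC (n (n x)) (n x)) in h3.
  rewrite (addC (n (n (n x))) (n (n x))) in h4.
  rewrite (addC (n (n (n x))) (n x)) in h4.
  transitivity ((n (n x ⊕ n (n (n x))) ⊕ n (n x ⊕ n (n x))) ⊕ (n (n (n x) ⊕ n (n (n x))) ⊕ n (n (n x) ⊕ n (n x)))).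
  { rewrite h1, h2. reflexivity. }
  rewrite ac_swap. rewrite h3. rewrite h4. reflexivity.
Qed.

Lemma invol x : n (n x) = x.
Proof.
  pose proof (hunt (n (n x)) (n x)) as h4.
  pose proof (hunt x (n (n x))) as h1.
  pose proof (hB (n x)) as hb.
  rewrite (addC (n (n (n x))) (n (n x))) in h4.
  rewrite <- hb in h4.
  rewrite (addC (n (n (n x))) (n x)) in h4.
  rewrite <- h4. etransitivity; [apply addC | exact h1].
Qed.

Lemma n_inj x y : n x = n y -> x = y.
Proof. intro h. rewrite <- (invol x), <- (invol y), h. reflexivity. Qed.

Lemma ac_mid a b c d : (a ⊕ b) ⊕ (c ⊕ d) = (a ⊕ c) ⊕ (b ⊕ d).
Proof. rewrite <- !addA. f_equal. apply addCA. Qed.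

Lemma one_gen x y : x ⊕ n x = y ⊕ n y.
Proof.
  pose proof (hunt x y) as hx. pose proof (hunt (n x) y) as hx'.
  pose proof (hunt y x) as hy. pose proof (hunt (n y) x) as hy'.
  rewrite !invol in hx', hy'.
  rewrite (addC (n y) (n x)), (addC (n y) x) in hy.
  rewrite (addC y (n x)), (addC y x) in hy'.
  transitivity ((n (n x ⊕ n y) ⊕ n (n x ⊕ y)) ⊕ (n (x ⊕ n y) ⊕ n (x ⊕ y))).
  { rewrite hx, hx'. reflexivity. }
  transitivity ((n (n y ⊕ n x) ⊕ n (n y ⊕ x)) ⊕ (n (y ⊕ n x) ⊕ n (y ⊕ x))).
  2:{ rewrite (addC (n y) (n x)), (addC (n y) x), (addC y (n x)), (addC y x). rewrite hy, hy'. reflexivity. }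
  rewrite (addC (n y) (n x)), (addC (n y) x), (addC y (n x)), (addC y x).
  rewrite ac_mid. reflexivity.
Qed.

Lemma one_const x : x ⊕ n x = one.
Proof. unfold top. apply one_gen. Qed.

Lemma n_one : n one = zero.
Proof. reflexivity. Qed.

Lemma n_zero : n zero = one.
Proof. unfold bot. apply invol. Qed.

Lemma zero_one : zero ⊕ one = one.
Proof. pose proof (one_const zero) as h. rewrite n_zero in h. exact h. Qed.

Lemma nx_eq x : n x = zero ⊕ n (x ⊕ x).
Proof.
  pose proof (hunt (n x) x) as h. rewrite invol in h. rewrite one_const, n_one in h.
  symmetry. exact h.
Qed.

Lemma one_abs x : one ⊕ x = one.
Proof.
  transitivity ((x ⊕ n x) ⊕ x). { rewrite one_const. reflexivity. }
  rewrite (addC x (n x)). rewrite <- addA. rewrite nx_eq. rewrite <- addA.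
  pose proof (one_const (n (x ⊕ x))) as h. rewrite invol in h.
  rewrite h. apply zero_one.
Qed.

Lemma abs_one x : x ⊕ one = one.
Proof. rewrite addC. apply one_abs. Qed.

Lemma zero_zero : zero ⊕ zero = zero.
Proof.
  pose proof (hunt zero zero) as h. rewrite n_zero, !one_abs, n_one in h. exact h.
Qed.

Lemma meet_self x : zero ⊕ n (n x ⊕ n x) = x.
Proof.
  pose proof (hunt x (n x)) as h. rewrite one_const, n_one in h. exact h.
Qed.

Lemma add_zero x : x ⊕ zero = x.
Proof.
  rewrite <- (meet_self x) at 1.
  rewrite <- addA, (addC _ zero), addA, zero_zero. apply meet_self.
Qed.

Lemma zero_add x : zero ⊕ x = x.
Proof. rewrite addC. apply add_zero. Qed.

Lemma meet_idem x : n (n x ⊕ n x) = x.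
Proof. rewrite <- (zero_add (n (n x ⊕ n x))). apply meet_self. Qed.

Lemma idem x : x ⊕ x = x.
Proof. apply n_inj. pose proof (meet_idem (n x)) as h. rewrite !invol in h. exact h. Qed.

Lemma le_refl x : x <<= x.
Proof. apply idem. Qed.

Lemma le_trans x y z : x <<= y -> y <<= z -> x <<= z.
Proof. unfold le. intros h1 h2. rewrite <- h2, addA, h1. reflexivity. Qed.

Lemma le_antisym x y : x <<= y -> y <<= x -> x = y.
Proof. unfold le. intros h1 h2. rewrite <- h1. rewrite addC. symmetry. exact h2. Qed.

Lemma le_zero x : zero <<= x.
Proof. apply zero_add. Qed.

Lemma le_one x : x <<= one.
Proof. apply abs_one. Qed.

Lemma le_addl x y : x <<= x ⊕ y.
Proof. unfold le. rewrite addA, idem. reflexivity. Qed.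

Lemma le_addr x y : y <<= x ⊕ y.
Proof. rewrite addC. apply le_addl. Qed.

Lemma antitone x y : x <<= y -> n y <<= n x.
Proof.
  unfold le. intro h.
  pose proof (hunt (n x) y) as e. rewrite invol, h in e.
  rewrite <- e. rewrite addCA, idem. reflexivity.
Qed.

Lemma self_le_compl c : c <<= n c -> c = zero.
Proof.
  unfold le. intro h. rewrite one_const in h.
  rewrite <- (invol c), <- h. reflexivity.
Qed.

Lemma meet_le_l x y : n (n x ⊕ n y) <<= x.
Proof. rewrite <- (invol x) at 2. apply antitone, le_addl. Qed.

Lemma meet_le_r x y : n (n x ⊕ n y) <<= y.
Proof. rewrite <- (invol y) at 2. apply antitone, le_addr. Qed.

Lemma meet_zero x y : n (n x ⊕ n y) = zero -> x <<= n y.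
Proof.
  intro h. pose proof (hunt x y) as e. rewrite h, zero_add in e.
  rewrite <- e. apply antitone, le_addr.
Qed.

Lemma atom_split b w : is_atom add n idr b -> b <<= w \/ b <<= n w.
Proof.
  intros [hb0 hb].
  destruct (hb _ (meet_le_l b w)) as [h|h].
  - right. apply meet_zero. exact h.
  - left. rewrite <- h. apply meet_le_r.
Qed.

Lemma le_atom_eq u v : u <<= v -> u <> zero -> is_atom add n idr v -> u = v.
Proof. intros h hu [_ hv]. destruct (hv _ h); [contradiction|assumption]. Qed.

Lemma atom_nz a : is_atom add n idr a -> a <> zero.
Proof. intros [h _]. exact h. Qed.

Lemma ax_wa x : (meet add n x idr ⨾ one) ⨾ one = meet add n x idr ⨾ one. Proof. apply HW. Qed.
Lemma comp_addl x y z : (x ⊕ y) ⨾ z = x ⨾ z ⊕ y ⨾ z. Proof. apply HW. Qed.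
Lemma comp_idr x : x ⨾ idr = x. Proof. apply HW. Qed.
Lemma conv_conv x : conv (conv x) = x. Proof. apply HW. Qed.
Lemma conv_add x y : conv (x ⊕ y) = conv x ⊕ conv y. Proof. apply HW. Qed.
Lemma conv_comp x y : conv (x ⨾ y) = conv y ⨾ conv x. Proof. apply HW. Qed.
Lemma tarski x y : conv x ⨾ n (x ⨾ y) <<= n y. Proof. apply HW. Qed.

Lemma comp_monol x y z : x <<= y -> x ⨾ z <<= y ⨾ z.
Proof. unfold le. intro h. rewrite <- comp_addl, h. reflexivity. Qed.

Lemma conv_mono x y : x <<= y -> conv x <<= conv y.
Proof. unfold le. intro h. rewrite <- conv_add, h. reflexivity. Qed.

Lemma comp_addr z x y : z ⨾ (x ⊕ y) = z ⨾ x ⊕ z ⨾ y.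
Proof.
  transitivity (conv (conv (z ⨾ (x ⊕ y)))). { symmetry. apply conv_conv. }
  rewrite conv_comp, conv_add, comp_addl, conv_add, !conv_comp, !conv_conv. reflexivity.
Qed.

Lemma comp_monor z x y : x <<= y -> z ⨾ x <<= z ⨾ y.
Proof. unfold le. intro h. rewrite <- comp_addr, h. reflexivity. Qed.

Lemma conv_idr : conv idr = idr.
Proof.
  assert (h : conv (conv idr ⨾ idr) = conv idr ⨾ idr) by (rewrite conv_comp, conv_conv; reflexivity).
  rewrite comp_idr, conv_conv in h. symmetry. exact h.
Qed.

Lemma idr_comp x : idr ⨾ x = x.
Proof.
  transitivity (conv (conv x ⨾ idr)). { rewrite conv_comp, conv_idr, conv_conv. reflexivity. }
  rewrite comp_idr, conv_conv. reflexivity.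
Qed.

Lemma sub_l e x : e <<= idr -> e ⨾ x <<= x.
Proof. intro h. rewrite <- (idr_comp x) at 2. apply comp_monol, h. Qed.

Lemma sub_r e x : e <<= idr -> x ⨾ e <<= x.
Proof. intro h. rewrite <- (comp_idr x) at 2. apply comp_monor, h. Qed.

Lemma conv_zero : conv zero = zero.
Proof.
  apply le_antisym; [|apply le_zero].
  rewrite <- (conv_conv zero) at 2. apply conv_mono, le_zero.
Qed.

Lemma atom_conv a : is_atom add n idr a -> is_atom add n idr (conv a).
Proof.
  intros [h0 h]. split.
  - intro e. apply h0. rewrite <- (conv_conv a), e. apply conv_zero.
  - intros y hy. apply conv_mono in hy. rewrite conv_conv in hy.
    destruct (h _ hy) as [e|e].
    + left. rewrite <- (conv_conv y), e. apply conv_zero.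
    + right. rewrite <- e. symmetry. apply conv_conv.
Qed.

Lemma conv_nz c : c <> zero -> conv c <> zero.
Proof. intros h e. apply h. rewrite <- (conv_conv c), e. apply conv_zero. Qed.

Lemma p1n c x y : c <<= x ⨾ y -> c <> zero -> ~ (y <<= n (conv x ⨾ c)).
Proof.
  intros h hc hy. apply hc. apply self_le_compl.
  apply (le_trans _ _ _ h). apply (le_trans _ _ _ (comp_monor x _ _ hy)).
  pose proof (tarski (conv x) c) as t. rewrite conv_conv in t. exact t.
Qed.

Lemma p1 c x b : c <<= x ⨾ b -> c <> zero -> is_atom add n idr b -> b <<= conv x ⨾ c.
Proof.
  intros h hc hb. destruct (atom_split b (conv x ⨾ c) hb) as [e|e]; [exact e|].
  exfalso. exact (p1n c x b h hc e).
Qed.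

Lemma p2 c x y : c <<= x ⨾ y -> c <> zero -> is_atom add n idr x -> x <<= c ⨾ conv y.
Proof.
  intros h hc hx.
  apply conv_mono in h. rewrite conv_comp in h.
  pose proof (p1 _ _ _ h (conv_nz c hc) (atom_conv x hx)) as e.
  rewrite conv_conv in e. apply conv_mono in e. rewrite conv_conv, conv_comp, conv_conv in e.
  exact e.
Qed.

Lemma nz_from c x y : c <<= x ⨾ y -> c <> zero -> y <<= one -> conv x ⨾ c <> zero.
Proof.
  intros h hc hy e. apply (p1n c x y h hc). rewrite e, n_zero. exact hy.
Qed.

Lemma subid_conv e : is_atom add n idr e -> e <<= idr -> conv e = e.
Proof.
  intros ha hi.
  assert (h : e <<= e ⨾ idr) by (rewrite comp_idr; apply le_refl).
  assert (hz := nz_from _ _ _ h (atom_nz _ ha) (le_one idr)).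
  assert (h1 : conv e ⨾ e <<= conv e) by (apply sub_r, hi).
  assert (h2 : conv e ⨾ e <<= e).
  { apply sub_l. rewrite <- conv_idr. apply conv_mono, hi. }
  rewrite <- (le_atom_eq _ _ h1 hz (atom_conv e ha)).
  apply (le_atom_eq _ _ h2 hz ha).
Qed.

Lemma meet_sub e : e <<= idr -> meet add n e idr = e.
Proof.
  intro h. unfold meet. apply antitone in h. unfold le in h. rewrite addC, h. apply invol.
Qed.

Lemma wa_sub e : e <<= idr -> (e ⨾ one) ⨾ one = e ⨾ one.
Proof. intro h. rewrite <- (meet_sub e h). apply ax_wa. Qed.

Definition sat e := is_atom add n idr e /\ e <<= idr.

Lemma Lu a e e' : is_atom add n idr a -> sat e -> sat e' -> a <<= e ⨾ a -> a <<= e' ⨾ a -> e = e'.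
Proof.
  intros ha [hea hei] [hea' hei'] h1 h2.
  assert (ha1 : a <<= e ⨾ one) by (apply (le_trans _ _ _ h1), comp_monor, le_one).
  assert (ha2 : a <<= e' ⨾ one) by (apply (le_trans _ _ _ h2), comp_monor, le_one).
  pose proof (p2 _ _ _ ha2 (atom_nz _ ha) hea') as h3.
  assert (h5 : e' <<= e ⨾ one).
  { apply (le_trans _ _ _ h3). apply (le_trans _ ((e ⨾ one) ⨾ conv one)).
    - apply comp_monol, ha1.
    - rewrite <- (wa_sub e hei) at 2. apply comp_monor, le_one. }
  pose proof (nz_from _ _ _ h5 (atom_nz _ hea') (le_refl one)) as hz.
  rewrite (subid_conv e hea hei) in hz.
  assert (k1 : e ⨾ e' <<= e) by (apply sub_r, hei').
  assert (k2 : e ⨾ e' <<= e') by (apply sub_l, hei).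
  rewrite <- (le_atom_eq _ _ k1 hz hea). apply (le_atom_eq _ _ k2 hz hea').
Qed.

Lemma Ru a e e' : is_atom add n idr a -> sat e -> sat e' -> a <<= a ⨾ e -> a <<= a ⨾ e' -> e = e'.
Proof.
  intros ha he he' h1 h2.
  apply conv_mono in h1. apply conv_mono in h2. rewrite conv_comp in h1, h2.
  rewrite (subid_conv e (proj1 he) (proj2 he)) in h1.
  rewrite (subid_conv e' (proj1 he') (proj2 he')) in h2.
  exact (Lu _ _ _ (atom_conv a ha) he he' h1 h2).
Qed.

Lemma Gx b : is_atom add n idr b -> exists e, sat e /\ e <<= b ⨾ conv b.
Proof.
  intro hb.
  assert (hw : n (n idr ⊕ n (b ⨾ conv b)) <> zero).
  { intro hw. apply meet_zero in hw.
    pose proof (tarski b (conv b)) as t.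
    apply (atom_nz _ (atom_conv b hb)). apply self_le_compl.
    apply (le_trans _ _ _ (comp_monor (conv b) _ _ hw)) in t.
    rewrite comp_idr in t. exact t. }
  destruct (HA _ hw) as [e [he hle]].
  exists e. split; [split; [exact he|]|].
  - exact (le_trans _ _ _ hle (meet_le_l _ _)).
  - exact (le_trans _ _ _ hle (meet_le_r _ _)).
Qed.

Lemma G1 b : is_atom add n idr b -> exists e, sat e /\ b <<= e ⨾ b.
Proof.
  intro hb. destruct (Gx b hb) as [e [he h]]. exists e. split; [exact he|].
  pose proof (p2 _ _ _ h (atom_nz _ (proj1 he)) hb) as k. rewrite conv_conv in k. exact k.
Qed.

Lemma G2 b : is_atom add n idr b -> exists e, sat e /\ b <<= b ⨾ e.
Proof.
  intro hb. destruct (Gx (conv b) (atom_conv b hb)) as [e [he h]]. exists e. split; [exact he|].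
  rewrite conv_conv in h.
  pose proof (p1 _ _ _ h (atom_nz _ (proj1 he)) hb) as k. rewrite conv_conv in k. exact k.
Qed.

Lemma G3 b : is_atom add n idr b -> exists e, sat e /\ e <<= conv b ⨾ b.
Proof.
  intro hb. destruct (Gx (conv b) (atom_conv b hb)) as [e [he h]]. exists e. split; [exact he|].
  rewrite conv_conv in h. exact h.
Qed.

Lemma subid_self e : sat e -> e <<= e ⨾ e.
Proof.
  intros [ha hi]. destruct (G1 e ha) as [f [[hfa hfi] h]].
  assert (k : e <<= f) by (apply (le_trans _ _ _ h), sub_r, hi).
  rewrite <- (le_atom_eq _ _ k (atom_nz _ ha) hfa) in h. exact h.
Qed.

Lemma S1 c b a : sat c -> is_atom add n idr b -> is_atom add n idr a -> c <<= b ⨾ a ->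
  b = conv a /\ conv a <<= c ⨾ conv a.
Proof.
  intros [hc hci] hb ha h.
  pose proof (p1 _ _ _ h (atom_nz _ hc) ha) as k.
  assert (k2 : a <<= conv b) by (apply (le_trans _ _ _ k), sub_r, hci).
  pose proof (le_atom_eq _ _ k2 (atom_nz _ ha) (atom_conv b hb)) as e.
  assert (eb : b = conv a) by (rewrite e; symmetry; apply conv_conv).
  split; [exact eb|]. rewrite eb in h.
  pose proof (p2 _ _ _ h (atom_nz _ hc) (atom_conv a ha)) as k3. exact k3.
Qed.

Lemma S2 c e a : c <> zero -> e <<= idr -> is_atom add n idr a -> c <<= e ⨾ a -> c = a.
Proof. intros hc he ha h. apply (le_atom_eq _ _ (le_trans _ _ _ h (sub_l _ _ he)) hc ha). Qed.

Lemma S3 c b e : c <> zero -> e <<= idr -> is_atom add n idr b -> c <<= b ⨾ e -> c = b.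
Proof. intros hc he hb h. apply (le_atom_eq _ _ (le_trans _ _ _ h (sub_r _ _ he)) hc hb). Qed.

Local Notation Bs := (Bset add n comp idr).
Local Notation Tr := (Trel add n comp idr).
Local Notation Es := (Eset add n comp idr).

Lemma Bset_atom s j : Bs s -> is_atom add n idr (comp3 s j).
Proof. destruct s as [[s0 s1] s2]. intros [h0 [h1 [h2 _]]]. destruct j; assumption. Qed.

Lemma mkB a b c : is_atom add n idr a -> is_atom add n idr b -> is_atom add n idr c ->
  b <<= c ⨾ a -> Bs ((a, b), c).
Proof. intros. unfold Bset; simpl. exact (conj H (conj H0 (conj H1 H2))). Qed.

Lemma ex_sub m k y : m <> k -> Bs y ->
  exists x, Bs x /\ comp3 x k <<= idr /\ comp3 x m = comp3 y m.
Proof.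
  destruct y as [[y0 y1] y2]. intros hmk [h0 [h1 [h2 h3]]]. simpl in *.
  destruct m, k; try congruence; simpl.
  - destruct (G3 y0 h0) as [e [[he hi] h]].
    exists ((y0, e), conv y0). split; [apply mkB; auto; apply atom_conv; auto|simpl; auto].
  - destruct (G1 y0 h0) as [e [[he hi] h]].
    exists ((y0, y0), e). split; [apply mkB; auto|simpl; auto].
  - destruct (G2 y1 h1) as [e [[he hi] h]].
    exists ((e, y1), y1). split; [apply mkB; auto|simpl; auto].
  - destruct (G1 y1 h1) as [e [[he hi] h]].
    exists ((y1, y1), e). split; [apply mkB; auto|simpl; auto].
  - destruct (G2 y2 h2) as [e [[he hi] h]].
    exists ((e, y2), y2). split; [apply mkB; auto|simpl; auto].
  - destruct (Gx y2 h2) as [e [[he hi] h]].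
    exists ((conv y2, e), y2). split; [apply mkB; auto; apply atom_conv; auto|simpl; auto].
Qed.

Lemma third_sub x k l m : k <> l -> k <> m -> l <> m -> Bs x ->
  comp3 x k <<= idr -> comp3 x l <<= idr -> comp3 x m <<= idr.
Proof.
  destruct x as [[x0 x1] x2]. intros hkl hkm hlm [h0 [h1 [h2 h3]]]. simpl in h0, h1, h2, h3.
  assert (F02 : x0 <<= idr -> x2 <<= idr -> x1 <<= idr).
  { intros a b. apply (le_trans _ _ _ h3). apply (le_trans _ _ _ (sub_r _ _ a)). exact b. }
  assert (F01 : x0 <<= idr -> x1 <<= idr -> x2 <<= idr).
  { intros a b. rewrite <- (S3 _ _ _ (atom_nz _ h1) a h2 h3). exact b. }
  assert (F12 : x1 <<= idr -> x2 <<= idr -> x0 <<= idr).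
  { intros a b. rewrite <- (S2 _ _ _ (atom_nz _ h1) b h0 h3). exact a. }
  destruct k, l, m; try congruence; simpl; auto.
Qed.

Lemma uniq k m x y : k <> m -> Tr k x y -> comp3 x m <<= idr -> comp3 y m <<= idr -> x = y.
Proof.
  destruct x as [[x0 x1] x2], y as [[y0 y1] y2].
  intros hkm [[hx0 [hx1 [hx2 hx3]]] [[hy0 [hy1 [hy2 hy3]]] e]] hxm hym.
  destruct k, m; try congruence; simpl in *; subst.
  -
    destruct (S1 x1 x2 y0 (conj hx1 hxm) hx2 hy0 hx3) as [ex kx].
    destruct (S1 y1 y2 y0 (conj hy1 hym) hy2 hy0 hy3) as [ey ky].
    rewrite (Lu _ _ _ (atom_conv _ hy0) (conj hx1 hxm) (conj hy1 hym) kx ky). congruence.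
  -
    pose proof (S2 _ _ _ (atom_nz _ hx1) hxm hy0 hx3) as ex.
    pose proof (S2 _ _ _ (atom_nz _ hy1) hym hy0 hy3) as ey. subst.
    rewrite (Lu _ _ _ hy0 (conj hx2 hxm) (conj hy2 hym) hx3 hy3). reflexivity.
  -
    pose proof (S3 _ _ _ (atom_nz _ hy1) hxm hx2 hx3) as ex.
    pose proof (S3 _ _ _ (atom_nz _ hy1) hym hy2 hy3) as ey. subst.
    rewrite (Ru _ _ _ hy1 (conj hx0 hxm) (conj hy0 hym) hx3 hy3). reflexivity.
  -
    pose proof (S2 _ _ _ (atom_nz _ hy1) hxm hx0 hx3) as ex.
    pose proof (S2 _ _ _ (atom_nz _ hy1) hym hy0 hy3) as ey. subst.
    rewrite (Lu _ _ _ hy1 (conj hx2 hxm) (conj hy2 hym) hx3 hy3). reflexivity.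
  -
    pose proof (S3 _ _ _ (atom_nz _ hx1) hxm hy2 hx3) as ex.
    pose proof (S3 _ _ _ (atom_nz _ hy1) hym hy2 hy3) as ey. subst.
    rewrite (Ru _ _ _ hy2 (conj hx0 hxm) (conj hy0 hym) hx3 hy3). reflexivity.
  -
    pose proof (p1 _ _ _ hx3 (atom_nz _ hx1) hx0) as kx.
    pose proof (p1 _ _ _ hy3 (atom_nz _ hy1) hy0) as ky.
    pose proof (le_atom_eq _ _ (le_trans _ _ _ kx (sub_r _ _ hxm)) (atom_nz _ hx0) (atom_conv _ hy2)) as ex.
    pose proof (le_atom_eq _ _ (le_trans _ _ _ ky (sub_r _ _ hym)) (atom_nz _ hy0) (atom_conv _ hy2)) as ey.
    subst.
    pose proof (p2 _ _ _ hx3 (atom_nz _ hx1) hy2) as kx2.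
    pose proof (p2 _ _ _ hy3 (atom_nz _ hy1) hy2) as ky2.
    rewrite conv_conv in kx2, ky2.
    rewrite (Lu _ _ _ hy2 (conj hx1 hxm) (conj hy1 hym) kx2 ky2). reflexivity.
Qed.

Lemma idx_dec (a b : idx3) : {a = b} + {a <> b}.
Proof. decide equality. Qed.

Lemma third_ex (k l : idx3) : k <> l -> exists m : idx3, m <> k /\ m <> l.
Proof.
  intro h. destruct k, l; try congruence;
  [exists i2|exists i1|exists i2|exists i0|exists i1|exists i0]; split; discriminate.
Qed.

Lemma E_iff k l m s : k <> l -> m <> k -> m <> l ->
  (Es k l s <-> Bs s /\ comp3 s m <<= idr).
Proof.
  intros hkl hmk hml. unfold Eset. split.
  - intros [hb [e|h]]; [contradiction|]. split; auto.
  - intros [hb h]. split; auto. right. intros j hj1 hj2.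
    assert (j = m) by (destruct j, k, l, m; congruence). subst. exact h.
Qed.

Lemma main : suitable Bs Tr Es.
Proof.
  unfold suitable. split; [|split; [|split; [|split; [|split; [|split; [|split]]]]]].
  - intros k x y [hx [hy _]]. auto.
  - intros k l x [hx _]. exact hx.
  - intros k x hx. split; [exact hx|split; [exact hx|reflexivity]].
  - intros k x y [hx [hy e]]. split; [exact hy|split; [exact hx|symmetry; exact e]].
  - intros k x y z [hx [hy e1]] [_ [hz e2]]. split; [exact hx|split; [exact hz|]].
    rewrite e1. exact e2.
  - intros k x. split; [intros [h _]; exact h|intros h; split; [exact h|left; reflexivity]].
  - intros k l m hkm hml y. destruct (idx_dec k l) as [<-|hkl].
    + destruct (third_ex k m hkm) as [j [hjk hjm]].
      split.
      * intros [hy _]. destruct (ex_sub m j y) as [x [hx [hxj hxm]]]; [congruence|exact hy|].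
        exists x. split; [|split].
        -- apply (proj2 (E_iff k m j x hkm hjk hjm)). auto.
        -- apply (proj2 (E_iff m k j x (not_eq_sym hkm) hjm hjk)). auto.
        -- split; [exact hy|split; [exact hx|symmetry; exact hxm]].
      * intros [x [_ [_ [hy _]]]]. split; [exact hy|left; reflexivity].
    + assert (hmk : m <> k) by (apply not_eq_sym; exact hkm).
      split.
      * intro hE. apply (E_iff k l m y hkl hmk hml) in hE. destruct hE as [hy hym].
        set (e := comp3 y m).
        assert (hes : sat e) by (split; [apply Bset_atom; exact hy|exact hym]).
        assert (hB : Bs ((e, e), e)).
        { apply mkB; try apply (proj1 hes). apply subid_self, hes. }
        assert (c3 : forall j, comp3 ((e, e), e) j = e) by (intro j; destruct j; reflexivity).
        exists ((e, e), e). split; [|split].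
        -- apply (proj2 (E_iff k m l _ hkm (not_eq_sym hkl) (not_eq_sym hml))).
           rewrite c3. split; [exact hB|exact hym].
        -- apply (proj2 (E_iff m l k _ hml hkm hkl)).
           rewrite c3. split; [exact hB|exact hym].
        -- split; [exact hy|split; [exact hB|]]. rewrite c3. reflexivity.
      * intros [x [h1 [h2 [hy [hx he]]]]].
        apply (E_iff k m l x hkm (not_eq_sym hkl) (not_eq_sym hml)) in h1.
        apply (E_iff m l k x hml hkm hkl) in h2.
        apply (proj2 (E_iff k l m y hkl hmk hml)). split; [exact hy|].
        rewrite he. apply (third_sub x l k m (not_eq_sym hkl) (not_eq_sym hml) hkm hx).
        -- exact (proj2 h1).
        -- exact (proj2 h2).
  - intros k l hkl x y hT hx hy.
    destruct (third_ex k l hkl) as [m [hmk hml]].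
    apply (E_iff k l m x hkl hmk hml) in hx. apply (E_iff k l m y hkl hmk hml) in hy.
    exact (uniq k m x y (not_eq_sym hmk) hT (proj2 hx) (proj2 hy)).
Qed.
End S.

Theorem lemma4 (A : Type) (add : A -> A -> A) (cmp : A -> A)
  (comp : A -> A -> A) (conv : A -> A) (idr : A) :
  is_WA add cmp comp conv idr ->
  atomic add cmp idr ->
  suitable (Bset add cmp comp idr) (Trel add cmp comp idr)
           (Eset add cmp comp idr).
Proof. intros HW HA. exact (main A add cmp comp conv idr HW HA). Qed.
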